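(* (i) For every $B\in\mathrm{M}_2(E_1)$, \[\{\mathrm{tr}(B)\mathrm{tr}(B^2)-\mathrm{tr}(B^3)\}I_2-\mathrm{tr}(B^2)B-\mathrm{tr}(B)B^2+2B^3=0.\] (ii) For every $B\in\mathrm{M}_3(E_1)$, \[\Big\{-\tfrac12\mathrm{tr}(B^2)^2\mathrm{tr}(B)+\mathrm{tr}(B^3)\mathrm{tr}(B^2)+\tfrac12\mathrm{tr}(B^4)\mathrm{tr}(B)-\mathrm{tr}(B^5)\Big\}I_3+\Big\{\tfrac12\mathrm{tr}(B^2)^2-\tfrac12\mathrm{tr}(B^4)\Big\}B\] \[+\{\mathrm{tr}(B^2)\mathrm{tr}(B)-\mathrm{tr}(B^3)\}B^2-2\mathrm{tr}(B^2)B^3-\mathrm{tr}(B)B^4+3B^5=0.\]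
   Context: $K$ is a field of characteristic zero. $E$ is the infinite-dimensional Grassmann (exterior) algebra over $K$, generated by countably many indeterminates $v_1,v_2,\dots$ subject to $v_iv_j+v_jv_i=0$ for all $i,j$. $E=E_0\oplus E_1$ is its natural $\mathbb{Z}_2$-grading: $E_0$ (resp. $E_1$) is the $K$-span of products of an even (resp. odd) number of generators. $\mathrm{M}_n(E_1)$ denotes the $n\times n$ matrices with entries in $E_1$, $I_n$ the identity matrix, $\mathrm{tr}$ the sum of diagonal entries; $\mathrm{tr}(B^2)^2$ means $(\mathrm{tr}(B^2))^2$. *)

(* Defs.v *)
(* A concrete model of the infinite-dimensional Grassmann
   algebra E over a field K:  an element is a formal K-linear combination of
   words in the generators v_0, v_1, ... (a word = seq nat), and two formal
   combinations denote the same element of E iff they have the same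
   coordinates in the standard basis v_S (S strictly increasing) of E.
   The coordinate of a word u on v_S is sign(u) if u has no repeated letter
   and is a permutation of S (sign = parity of the number of inversions),
   and 0 otherwise; this is exactly the normal form in
   K<v_1,v_2,...>/(v_i v_j + v_j v_i). *)
From HB Require Import structures.
From mathcomp Require Import all_boot all_order all_algebra.
Set Implicit Arguments. Unset Strict Implicit. Unset Printing Implicit Defensive.
Import Order.TTheory GRing.Theory Num.Theory.
Local Open Scope ring_scope.

Definition word := seq nat.

Definition Gr (K : fieldType) := seq (K * word).

Section Grassmann.
Variable K : fieldType.

Definition gzero : Gr K := [::].
Definition gone : Gr K := [:: (1, [::])].
Definition ggen (i : nat) : Gr K := [:: (1, [:: i])].
Definition gadd (x y : Gr K) : Gr K := x ++ y.
Definition gscale (a : K) (x : Gr K) : Gr K := [seq (a * p.1, p.2) | p <- x].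
Definition gopp (x : Gr K) : Gr K := gscale (-1) x.
Definition gmul (x y : Gr K) : Gr K :=
  [seq (p.1 * q.1, p.2 ++ q.2) | p <- x, q <- y].
Definition gsum (s : seq (Gr K)) : Gr K := foldr gadd gzero s.

Fixpoint ninv (u : word) : nat :=
  if u is a :: u' then (count (fun b => b < a)%N u' + ninv u')%N else 0%N.

Definition wcoef (u S : word) : K :=
  if uniq u && perm_eq u S then (-1) ^+ ninv u else 0.

Definition gcoef (x : Gr K) (S : word) : K :=
  \sum_(p <- x) p.1 * wcoef p.2 S.

Definition gzerop (x : Gr K) : Prop :=
  forall S : word, sorted ltn S -> gcoef x S = 0.

Definition godd (x : Gr K) : Prop :=
  forall S : word, sorted ltn S -> ~~ odd (size S) -> gcoef x S = 0.

Definition gmx (n : nat) := 'I_n -> 'I_n -> Gr K.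

Definition mxadd n (A B : gmx n) : gmx n := fun i j => gadd (A i j) (B i j).
Definition mxmul n (A B : gmx n) : gmx n :=
  fun i j => gsum [seq gmul (A i k) (B k j) | k <- enum 'I_n].
Definition mxlmul n (c : Gr K) (A : gmx n) : gmx n := fun i j => gmul c (A i j).
Definition mxscale n (a : K) (A : gmx n) : gmx n := fun i j => gscale a (A i j).
Definition mxscalar (n : nat) (c : Gr K) : gmx n := fun i j => if i == j then c else gzero.
Fixpoint mxpow n (B : gmx n) (k : nat) : gmx n :=
  match k with
  | 0 => @mxscalar n gone
  | k'.+1 => mxmul B (mxpow B k')
  end.
Definition mxtr n (A : gmx n) : Gr K := gsum [seq A i i | i <- enum 'I_n].

Definition mxzerop n (A : gmx n) : Prop := forall i j, gzerop (A i j).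
Definition mxodd n (A : gmx n) : Prop := forall i j, godd (A i j).

End Grassmann.
Arguments mxscalar {K} n c.

(* Main.v *)
Require Import Defs.
From HB Require Import structures.
From mathcomp Require Import all_boot all_order all_algebra.
From mathcomp Require Import ring zify.
Set Implicit Arguments. Unset Strict Implicit. Unset Printing Implicit Defensive.
Import Order.TTheory GRing.Theory Num.Theory.
Local Open Scope ring_scope.

Definition cross (u v : word) : nat := (\sum_(a <- u) count (fun b => b < a) v)%N.

Lemma ninv_cat u v : ninv (u ++ v) = (ninv u + ninv v + cross u v)%N.
Proof.
elim: u => [|a u IH] /=; first by rewrite /cross big_nil addn0.
rewrite IH /cross big_cons count_cat; lia.
Qed.

Lemma cross_perml u u' v : perm_eq u u' -> cross u v = cross u' v.
Proof. by move=> h; apply: perm_big. Qed.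

Lemma cross_permr u v v' : perm_eq v v' -> cross u v = cross u v'.
Proof. by move=> /permP h; apply: eq_bigr => a _; apply: h. Qed.

Lemma count_split a v : a \notin v ->
  (count (fun b => b < a) v + count (fun b => a < b) v = size v)%N.
Proof.
elim: v => //= b v IH; rewrite in_cons negb_or => /andP[ne /IH H].
case: (ltngtP b a) ne => [h|h|e]; [move=> _; lia|move=> _; lia|by []].
Qed.

Lemma cross_consr a u v :
  cross v (a :: u) = (count (fun b => a < b) v + cross v u)%N.
Proof.
rewrite /cross; elim: v => [|b v IH]; first by rewrite !big_nil.
by rewrite !big_cons IH /=; lia.
Qed.

Lemma cross_sym u v : uniq (u ++ v) -> (cross u v + cross v u = size u * size v)%N.
Proof.
elim: u => [|a u IH] /=.
  by move=> _; rewrite /cross big_nil add0n big1 // => b _.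
move=> /andP[nav /IH].
rewrite mem_cat negb_or in nav; case/andP: nav => _ nav.
rewrite cross_consr /cross big_cons -/(cross u v) -/(cross v u) mulSn.
move=> h2; have h1 := count_split nav; by rewrite addnACA h1 h2.
Qed.

Lemma ninv_sorted s : sorted leq s -> ninv s = 0%N.
Proof.
elim: s => //= a s IH hs.
rewrite IH ?(path_sorted hs) // addn0.
have /allP hall := order_path_min leq_trans hs.
rewrite (eq_in_count (a2 := pred0)) ?count_pred0 // => b /hall /=.
by rewrite ltnNge => ->.
Qed.

Fixpoint ins (a : nat) (s : word) : option (bool * word) :=
  match s with
  | [::] => Some (false, [:: a])
  | b :: s' => if (a < b)%N then Some (false, a :: s)
               else if a == b then None
               else match ins a s' with
                    | Some (e, t) => Some (~~ e, b :: t)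
                    | None => None end
  end.
Fixpoint nfw (w : word) : option (bool * word) :=
  match w with
  | [::] => Some (false, [::])
  | a :: w' => match nfw w' with
               | None => None
               | Some (e, t) => match ins a t with
                                | None => None
                                | Some (e', t') => Some (e (+) e', t') end end
  end.
Definition sgnq (F : fieldType) (e : bool) : F := if e then -1 else 1.
Fixpoint nfX (F : fieldType) (X : Gr F) : Gr F :=
  match X with
  | [::] => [::]
  | p :: X' => match nfw p.2 with
               | None => nfX X'
               | Some (e, t) => (sgnq F e * p.1, t) :: nfX X' end
  end.
Fixpoint csum (F : fieldType) (t : word) (X : Gr F) : F :=
  match X with [::] => 0 | p :: X' => (if p.2 == t then p.1 else 0) + csum t X' end.
Definition zcheck (F : fieldType) (X : Gr F) : bool := all (fun t => csum t X == 0) (map snd X).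


Fixpoint ordl n : seq 'I_n := match n with 0 => [::] | n'.+1 => ord0 :: map (lift ord0) (ordl n') end.
Section Exprs.
Variable F : fieldType.
Definition E2 (B : gmx F 2) : gmx F 2 :=
     let t1 := mxtr B in
     let t2 := mxtr (mxpow B 2) in
     let t3 := mxtr (mxpow B 3) in
       (mxadd (mxscalar 2 (gadd (gmul t1 t2) (gopp t3)))
       (mxadd (mxlmul (gopp t2) B)
       (mxadd (mxlmul (gopp t1) (mxpow B 2))
              (mxscale 2%:R (mxpow B 3))))).
Definition E3 (B : gmx F 3) : gmx F 3 :=
     let t1 := mxtr B in
     let t2 := mxtr (mxpow B 2) in
     let t3 := mxtr (mxpow B 3) in
     let t4 := mxtr (mxpow B 4) in
     let t5 := mxtr (mxpow B 5) in
       (mxadd (mxscalar 3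
                (gadd (gscale (- (2%:R)^-1) (gmul (gmul t2 t2) t1))
                (gadd (gmul t3 t2)
                (gadd (gscale ((2%:R)^-1) (gmul t4 t1))
                      (gopp t5)))))
       (mxadd (mxlmul (gadd (gscale ((2%:R)^-1) (gmul t2 t2))
                            (gscale (- (2%:R)^-1) t4)) B)
       (mxadd (mxlmul (gadd (gmul t2 t1) (gopp t3)) (mxpow B 2))
       (mxadd (mxlmul (gscale (- 2%:R) t2) (mxpow B 3))
       (mxadd (mxlmul (gopp t1) (mxpow B 4))
              (mxscale 3%:R (mxpow B 5))))))).
Definition mxmulc n (A B : gmx F n) : gmx F n :=
  fun i j => gsum [seq gmul (A i k) (B k j) | k <- ordl n].
Fixpoint mxpowc n (B : gmx F n) (k : nat) : gmx F n :=
  match k with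
  | 0 => @mxscalar F n (gone F)
  | k'.+1 => mxmulc B (mxpowc B k')
  end.
Definition mxtrc n (A : gmx F n) : Gr F := gsum [seq A i i | i <- ordl n].
Definition Gen n : gmx F n := fun i j => ggen F (i * n + j)%N.
Definition E2c (B : gmx F 2) : gmx F 2 :=
     let t1 := mxtrc B in
     let t2 := mxtrc (mxpowc B 2) in
     let t3 := mxtrc (mxpowc B 3) in
       (mxadd (mxscalar 2 (gadd (gmul t1 t2) (gopp t3)))
       (mxadd (mxlmul (gopp t2) B)
       (mxadd (mxlmul (gopp t1) (mxpowc B 2))
              (mxscale 2%:R (mxpowc B 3))))).
Definition E3c (B : gmx F 3) : gmx F 3 :=
     let t1 := mxtrc B in
     let t2 := mxtrc (mxpowc B 2) in
     let t3 := mxtrc (mxpowc B 3) in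
     let t4 := mxtrc (mxpowc B 4) in
     let t5 := mxtrc (mxpowc B 5) in
       (mxadd (mxscalar 3
                (gadd (gscale (- (2%:R)^-1) (gmul (gmul t2 t2) t1))
                (gadd (gmul t3 t2)
                (gadd (gscale ((2%:R)^-1) (gmul t4 t1))
                      (gopp t5)))))
       (mxadd (mxlmul (gadd (gscale ((2%:R)^-1) (gmul t2 t2))
                            (gscale (- (2%:R)^-1) t4)) B)
       (mxadd (mxlmul (gadd (gmul t2 t1) (gopp t3)) (mxpowc B 2))
       (mxadd (mxlmul (gscale (- 2%:R) t2) (mxpowc B 3))
       (mxadd (mxlmul (gopp t1) (mxpowc B 4))
              (mxscale 3%:R (mxpowc B 5))))))).
End Exprs.


Section GK.
Variable K : fieldType.
Local Notation wcoef := (@wcoef K).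
Local Notation gcoef := (@gcoef K).

Lemma sortK u : perm_eq u (sort leq u).
Proof. by rewrite perm_sym perm_sort. Qed.

Lemma wcoef_catl u v S :
  wcoef (u ++ v) S = wcoef u (sort leq u) * wcoef (sort leq u ++ v) S.
Proof.
rewrite /wcoef sortK andbT.
have pc : perm_eq (sort leq u ++ v) (u ++ v) by rewrite perm_cat2r perm_sort.
rewrite (perm_uniq pc) (permPl pc).
case Hu: (uniq u); last by rewrite cat_uniq Hu /= mul0r.
case: ifP => _; last by rewrite mulr0.
rewrite !ninv_cat (ninv_sorted (sort_sorted leq_total u)) (cross_perml _ (sortK u)).
by rewrite -exprD; congr (_ ^+ _); lia.
Qed.

Lemma wcoef_catr u v S :
  wcoef (v ++ u) S = wcoef u (sort leq u) * wcoef (v ++ sort leq u) S.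
Proof.
rewrite /wcoef sortK andbT.
have pc : perm_eq (v ++ sort leq u) (v ++ u) by rewrite perm_cat2l perm_sort.
rewrite (perm_uniq pc) (permPl pc).
case Hu: (uniq u); last by rewrite cat_uniq Hu !andbF mul0r.
case: ifP => _; last by rewrite mulr0.
rewrite !ninv_cat (ninv_sorted (sort_sorted leq_total u)) (cross_permr _ (sortK u)).
by rewrite -exprD; congr (_ ^+ _); lia.
Qed.

Lemma wcoef_swap T U S :
  wcoef (T ++ U) S = (-1) ^+ (size T * size U) * wcoef (U ++ T) S.
Proof.
rewrite /wcoef uniq_catC (perm_catC T U).
case: ifP => h; last by rewrite mulr0.
have hc := cross_sym (proj1 (andP h)).
rewrite !ninv_cat -exprD.
have -> : (size T * size U + (ninv U + ninv T + cross U T) =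
   (ninv T + ninv U + cross T U) + (cross U T).*2)%N by rewrite mulnC -hc; lia.
by rewrite -[RHS]signr_odd oddD odd_double addbF signr_odd.
Qed.

Lemma gcoef_add x y S : gcoef (gadd x y) S = gcoef x S + gcoef y S.
Proof. by rewrite /gcoef big_cat. Qed.
Lemma gcoef0 S : gcoef (gzero K) S = 0.
Proof. by rewrite /gcoef big_nil. Qed.
Lemma gcoef_scale a x S : gcoef (gscale a x) S = a * gcoef x S.
Proof. by rewrite /gcoef big_map mulr_sumr; apply: eq_bigr => p _; rewrite mulrA. Qed.
Lemma gcoef_sum s S : gcoef (gsum s) S = \sum_(x <- s) gcoef x S.
Proof. elim: s => [|x s IH]; first by rewrite big_nil gcoef0.
by rewrite big_cons /= gcoef_add IH. Qed.
Lemma gcoef_mul x y S : gcoef (gmul x y) S =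
  \sum_(p <- x) \sum_(q <- y) p.1 * q.1 * wcoef (p.2 ++ q.2) S.
Proof. by rewrite /gcoef /gmul big_allpairs_dep. Qed.


Definition goodL (x : Gr K) (L : seq word) :=
  [/\ uniq L, all (sorted ltn) L & forall p, p \in x -> uniq p.2 -> sort leq p.2 \in L].

Lemma sum_L x (F : word -> K) L : goodL x L ->
  \sum_(p <- x) p.1 * wcoef p.2 (sort leq p.2) * F (sort leq p.2) =
  \sum_(T <- L) gcoef x T * F T.
Proof.
case=> uL /allP sL hL.
under [RHS]eq_bigr => T _ do rewrite /gcoef mulr_suml.
rewrite (exchange_big) /=; apply: eq_big_seq => p px.
under eq_bigr => T _ do rewrite -mulrA.
rewrite -mulr_sumr -mulrA; congr (_ * _).
case Hu: (uniq p.2); last first.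
  by rewrite /wcoef Hu /= mul0r big1 // => T _; rewrite mul0r.
rewrite (bigD1_seq (sort leq p.2)) ?hL //= big_seq_cond big1 ?addr0 // => T /andP[TL ne].
rewrite /wcoef Hu /=; case: ifP => [pT|]; last by rewrite mul0r.
have sT : sorted leq T by move: (sL T TL); rewrite ltn_sorted_uniq_leq => /andP[].
have := (perm_sortP leq_total leq_trans anti_leq _ _ pT).
by rewrite (sorted_sort leq_trans sT) => e; rewrite e eqxx in ne.
Qed.

Lemma gcoef_mul2 x y L L' S : goodL x L -> goodL y L' ->
  gcoef (gmul x y) S =
  \sum_(T <- L) \sum_(U <- L') gcoef x T * gcoef y U * wcoef (T ++ U) S.
Proof.
move=> gx gy; rewrite gcoef_mul.
transitivity (\sum_(p <- x) p.1 * wcoef p.2 (sort leq p.2) *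
   (fun T => \sum_(q <- y) q.1 * wcoef (T ++ q.2) S) (sort leq p.2)).
  apply: eq_bigr => p _ /=; rewrite mulr_sumr; apply: eq_bigr => q _.
  by rewrite wcoef_catl; ring.
transitivity (\sum_(T <- L) gcoef x T * (\sum_(q <- y) q.1 * wcoef (T ++ q.2) S)).
  exact: (sum_L (fun T => \sum_(q <- y) q.1 * wcoef (T ++ q.2) S) gx).
apply: eq_bigr => T _ /=.
transitivity (gcoef x T * \sum_(q <- y) q.1 * wcoef q.2 (sort leq q.2) *
   (fun U => wcoef (T ++ U) S) (sort leq q.2)).
  by congr (_ * _); apply: eq_bigr => q _; rewrite wcoef_catr mulrA.
rewrite (sum_L (fun U => wcoef (T ++ U) S) gy) mulr_sumr.
by apply: eq_bigr => U _; rewrite mulrA.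
Qed.

Definition mkL (x : Gr K) : seq word := undup [seq sort leq p.2 | p <- x & uniq p.2].

Lemma goodL_sub x z : {subset x <= z} -> goodL x (mkL z).
Proof.
move=> sub; split; first exact: undup_uniq.
  apply/allP => T; rewrite mem_undup => /mapP[p]; rewrite mem_filter => /andP[up _] ->.
  by rewrite ltn_sorted_uniq_leq sort_uniq up sort_sorted //; exact: leq_total.
move=> p px up; rewrite mem_undup; apply: map_f.
by rewrite mem_filter up sub.
Qed.

Lemma goodL_self x : goodL x (mkL x).
Proof. exact: goodL_sub. Qed.

Definition geq (x y : Gr K) := forall S, gcoef x S = gcoef y S.

Lemma geq_mull x x' y : geq x x' -> geq (gmul x y) (gmul x' y).
Proof.
move=> h S.
have g1 : goodL x (mkL (x ++ x')) by apply: goodL_sub => p hp; rewrite mem_cat hp.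
have g2 : goodL x' (mkL (x ++ x')) by apply: goodL_sub => p hp; rewrite mem_cat hp orbT.
rewrite (gcoef_mul2 _ g1 (goodL_self y)) (gcoef_mul2 _ g2 (goodL_self y)).
by apply: eq_bigr => T _; rewrite h.
Qed.

Lemma geq_mulr x y y' : geq y y' -> geq (gmul x y) (gmul x y').
Proof.
move=> h S.
have g1 : goodL y (mkL (y ++ y')) by apply: goodL_sub => p hp; rewrite mem_cat hp.
have g2 : goodL y' (mkL (y ++ y')) by apply: goodL_sub => p hp; rewrite mem_cat hp orbT.
rewrite (gcoef_mul2 _ (goodL_self x) g1) (gcoef_mul2 _ (goodL_self x) g2).
by apply: eq_bigr => T _; apply: eq_bigr => U _; rewrite h.
Qed.

Lemma gmul_anti x y : godd x -> godd y -> geq (gmul x y) (gscale (-1) (gmul y x)).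
Proof.
move=> ox oy S; rewrite gcoef_scale.
rewrite (gcoef_mul2 _ (goodL_self x) (goodL_self y)).
rewrite (gcoef_mul2 _ (goodL_self y) (goodL_self x)).
rewrite [in RHS]exchange_big mulr_sumr; apply: eq_big_seq => T hT.
rewrite mulr_sumr; apply: eq_big_seq => U hU.
have [_ /allP sx _] := goodL_self x.
have [_ /allP sy _] := goodL_self y.
case: (boolP (odd (size T))) => oT; last by rewrite ox ?sx // !(mul0r, mulr0).
case: (boolP (odd (size U))) => oU; last by rewrite oy ?sy // !(mul0r, mulr0).
rewrite wcoef_swap -signr_odd oddM oT oU /= expr1; ring.
Qed.

Lemma gmulA x y z S : gcoef (gmul (gmul x y) z) S = gcoef (gmul x (gmul y z)) S.
Proof.
rewrite !gcoef_mul big_allpairs_dep; apply: eq_bigr => p _.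
rewrite big_allpairs_dep; apply: eq_bigr => q _; apply: eq_bigr => r _ /=.
by rewrite catA mulrA.
Qed.

Lemma gmulDl x y z S : gcoef (gmul (gadd x y) z) S = gcoef (gmul x z) S + gcoef (gmul y z) S.
Proof. by rewrite !gcoef_mul big_cat. Qed.
Lemma gmulDr x y z S : gcoef (gmul x (gadd y z)) S = gcoef (gmul x y) S + gcoef (gmul x z) S.
Proof. by rewrite !gcoef_mul -big_split; apply: eq_bigr => p _; rewrite big_cat. Qed.
Lemma gmulZl a x y S : gcoef (gmul (gscale a x) y) S = a * gcoef (gmul x y) S.
Proof.
rewrite !gcoef_mul big_map mulr_sumr; apply: eq_bigr => p _.
by rewrite mulr_sumr; apply: eq_bigr => q _ /=; ring.
Qed.
Lemma gmulZr a x y S : gcoef (gmul x (gscale a y)) S = a * gcoef (gmul x y) S.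
Proof.
rewrite !gcoef_mul mulr_sumr; apply: eq_bigr => p _.
by rewrite big_map mulr_sumr; apply: eq_bigr => q _ /=; ring.
Qed.
Lemma gmul0l y S : gcoef (gmul (gzero K) y) S = 0.
Proof. by rewrite gcoef_mul big_nil. Qed.
Lemma gmul0r x S : gcoef (gmul x (gzero K)) S = 0.
Proof. by rewrite gcoef_mul big1 // => p _; rewrite big_nil. Qed.
Lemma gmul1l x S : gcoef (gmul (gone K) x) S = gcoef x S.
Proof. by rewrite gcoef_mul big_cons big_nil addr0 /=; apply: eq_bigr => q _; rewrite mul1r. Qed.
Lemma gmul1r x S : gcoef (gmul x (gone K)) S = gcoef x S.
Proof.
rewrite gcoef_mul; apply: eq_bigr => p _.
by rewrite big_cons big_nil addr0 /= mulr1 cats0.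
Qed.
Lemma gcoef_opp x S : gcoef (gopp x) S = - gcoef x S.
Proof. by rewrite /gopp gcoef_scale mulN1r. Qed.

Lemma gmul_sumr x s S : gcoef (gmul x (gsum s)) S = \sum_(y <- s) gcoef (gmul x y) S.
Proof.
elim: s => [|y s IH]; first by rewrite big_nil gmul0r.
by rewrite big_cons /= gmulDr IH.
Qed.
Lemma gmul_suml s y S : gcoef (gmul (gsum s) y) S = \sum_(x <- s) gcoef (gmul x y) S.
Proof.
elim: s => [|x s IH]; first by rewrite big_nil gmul0l.
by rewrite big_cons /= gmulDl IH.
Qed.

End GK.

Section Sub.
Variables (F K : fieldType) (f : F -> K).
Hypothesis fM : forall a b, f (a * b) = f a * f b.
Hypothesis f1 : f 1 = 1.
Hypothesis fN1 : f (-1) = -1.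
Variable v : nat -> Gr K.

Definition gprod (w : word) : Gr K := foldr (fun a acc => gmul (v a) acc) (gone K) w.
Definition sub (x : Gr F) : Gr K := gsum [seq gscale (f p.1) (gprod p.2) | p <- x].

Lemma gcoef_sub x S : gcoef (sub x) S = \sum_(p <- x) f p.1 * gcoef (gprod p.2) S.
Proof. by rewrite /sub gcoef_sum big_map; apply: eq_bigr => p _; rewrite gcoef_scale. Qed.

Lemma gprod_cat w1 w2 : geq (gprod (w1 ++ w2)) (gmul (gprod w1) (gprod w2)).
Proof.
elim: w1 => [|a w1 IH] S /=; first by rewrite gmul1l.
by rewrite (geq_mulr _ IH) gmulA.
Qed.

Lemma sub_mul x y S : gcoef (sub (gmul x y)) S = gcoef (gmul (sub x) (sub y)) S.
Proof.
rewrite gcoef_sub big_allpairs_dep /sub gmul_suml big_map; apply: eq_bigr => p _.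
rewrite gmul_sumr big_map; apply: eq_bigr => q _ /=.
by rewrite gmulZl gmulZr fM gprod_cat; ring.
Qed.
Lemma sub_add x y S : gcoef (sub (gadd x y)) S = gcoef (sub x) S + gcoef (sub y) S.
Proof. by rewrite !gcoef_sub big_cat. Qed.
Lemma sub_scale a x S : gcoef (sub (gscale a x)) S = f a * gcoef (sub x) S.
Proof.
rewrite !gcoef_sub big_map mulr_sumr; apply: eq_bigr => p _ /=.
by rewrite fM mulrA.
Qed.
Lemma sub_zero S : gcoef (sub (gzero F)) S = 0.
Proof. by rewrite gcoef_sub big_nil. Qed.
Lemma sub_one S : gcoef (sub (gone F)) S = gcoef (gone K) S.
Proof. by rewrite gcoef_sub big_cons big_nil addr0 /= f1 mul1r. Qed.
Lemma sub_gen k S : gcoef (sub (ggen F k)) S = gcoef (v k) S.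
Proof. by rewrite gcoef_sub big_cons big_nil addr0 /= f1 mul1r gmul1r. Qed.
Lemma sub_sum s S : gcoef (sub (gsum s)) S = \sum_(x <- s) gcoef (sub x) S.
Proof.
elim: s => [|x s IH]; first by rewrite big_nil sub_zero.
by rewrite big_cons /= sub_add IH.
Qed.

Lemma cg_add x y x' y' : geq (sub x) x' -> geq (sub y) y' -> geq (sub (gadd x y)) (gadd x' y').
Proof. by move=> h1 h2 S; rewrite sub_add gcoef_add h1 h2. Qed.
Lemma cg_mul x y x' y' : geq (sub x) x' -> geq (sub y) y' -> geq (sub (gmul x y)) (gmul x' y').
Proof. by move=> h1 h2 S; rewrite sub_mul (geq_mull _ h1) (geq_mulr _ h2). Qed.
Lemma cg_scale a a' x x' : f a = a' -> geq (sub x) x' -> geq (sub (gscale a x)) (gscale a' x').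
Proof. by move=> e h S; rewrite sub_scale gcoef_scale h e. Qed.
Lemma cg_opp x x' : geq (sub x) x' -> geq (sub (gopp x)) (gopp x').
Proof. exact: cg_scale. Qed.
Lemma cg_sum (I : Type) (l : seq I) (X : I -> Gr F) (X' : I -> Gr K) :
  (forall k, geq (sub (X k)) (X' k)) ->
  geq (sub (gsum [seq X k | k <- l])) (gsum [seq X' k | k <- l]).
Proof. by move=> h S; rewrite sub_sum gcoef_sum !big_map; apply: eq_bigr => k _; apply: h. Qed.

Lemma cg_one : geq (sub (gone F)) (gone K).
Proof. by move=> S; rewrite sub_one. Qed.

Definition msub n (A : gmx F n) : gmx K n := fun i j => sub (A i j).
Definition meq n (A B : gmx K n) := forall i j, geq (A i j) (B i j).

Lemma mcg_add n (A B : gmx F n) A' B' : meq (msub A) A' -> meq (msub B) B' ->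
  meq (msub (mxadd A B)) (mxadd A' B').
Proof. by move=> h1 h2 i j; apply: cg_add; [apply: h1|apply: h2]. Qed.
Lemma mcg_mul n (A B : gmx F n) A' B' : meq (msub A) A' -> meq (msub B) B' ->
  meq (msub (mxmul A B)) (mxmul A' B').
Proof. by move=> h1 h2 i j; apply: cg_sum => k; apply: cg_mul; [apply: h1|apply: h2]. Qed.
Lemma mcg_lmul n c c' (A : gmx F n) A' : geq (sub c) c' -> meq (msub A) A' ->
  meq (msub (mxlmul c A)) (mxlmul c' A').
Proof. by move=> h1 h2 i j; apply: cg_mul; [apply: h1|apply: h2]. Qed.
Lemma mcg_scale n a a' (A : gmx F n) A' : f a = a' -> meq (msub A) A' ->
  meq (msub (mxscale a A)) (mxscale a' A').
Proof. by move=> h1 h2 i j; apply: cg_scale; [apply: h1|apply: h2]. Qed.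
Lemma mcg_scalar n c c' : geq (sub c) c' -> meq (msub (mxscalar n c)) (mxscalar n c').
Proof.
move=> h i j S; rewrite /msub /mxscalar; case: (i == j) => //.
Qed.
Lemma mcg_pow n (A : gmx F n) A' k : meq (msub A) A' -> meq (msub (mxpow A k)) (mxpow A' k).
Proof.
move=> h; elim: k => [|k IH] /=; last exact: mcg_mul.
by apply: mcg_scalar => S; rewrite sub_one.
Qed.
Lemma cg_tr n (A : gmx F n) A' : meq (msub A) A' -> geq (sub (mxtr A)) (mxtr A').
Proof. by move=> h; apply: cg_sum => i; apply: h. Qed.

Lemma mcg_gen n (B : gmx K n) : (forall i j : 'I_n, v (i * n + j)%N = B i j) ->
  meq (msub (fun i j => ggen F (i * n + j)%N)) B.
Proof. by move=> h i j S; rewrite /msub sub_gen h. Qed.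

Section Odd.
Hypothesis hodd : forall k, godd (v k).
Hypothesis h2 : (2%:R : K) != 0.

Lemma gmul_sq (x : Gr K) S : godd x -> gcoef (gmul x x) S = 0.
Proof.
move=> ox; have := gmul_anti ox ox S; rewrite gcoef_scale mulN1r => /eqP.
rewrite -subr_eq0 opprK -mulr2n -mulr_natr mulf_eq0 (negPf h2) orbF.
by move/eqP.
Qed.

Definition nfg (o : option (bool * word)) : Gr K :=
  match o with Some (e, t) => gscale (sgnq K e) (gprod t) | None => gzero K end.

Lemma ins_ok a s : geq (gmul (v a) (gprod s)) (nfg (ins a s)).
Proof.
elim: s => [|b s IH] S /=; first by rewrite gcoef_scale mul1r.
case: ifP => [_|_]; first by rewrite /= gcoef_scale mul1r.
case: eqP => [->|_].
  by rewrite gcoef0 -gmulA (geq_mull _ (x' := gzero K) (fun S => etrans (gmul_sq S (hodd b)) (esym (gcoef0 K S)))) gmul0l.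
rewrite -gmulA (geq_mull _ (gmul_anti (hodd a) (hodd b))) gmulZl gmulA.
rewrite (geq_mulr _ IH); case: (ins a s) => [[e t]|] /=; last by rewrite gmul0r gcoef0 mulr0.
by rewrite gmulZr gcoef_scale; case: e => /=; ring.
Qed.

Lemma nfw_ok w : geq (gprod w) (nfg (nfw w)).
Proof.
elim: w => [|a w IH] S; first by rewrite /nfw /nfg gcoef_scale mul1r.
rewrite /= (geq_mulr _ IH); case: (nfw w) => [[e t]|] /=; last by rewrite gmul0r gcoef0.
rewrite gmulZr ins_ok; case: (ins a t) => [[e' t']|] /=; last by rewrite gcoef0 mulr0.
by rewrite !gcoef_scale; case: e; case: e' => /=; ring.
Qed.

Lemma fsgn e : f (sgnq F e) = sgnq K e.
Proof. by case: e => /=. Qed.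

Lemma nfX_cons (p : F * word) X : nfX (p :: X) =
  match nfw p.2 with Some (e, t) => (sgnq F e * p.1, t) :: nfX X | None => nfX X end.
Proof. by []. Qed.

Lemma sub_nfX X S : gcoef (sub X) S = gcoef (sub (nfX X)) S.
Proof.
elim: X => [|p X IH] //.
rewrite [in LHS]gcoef_sub big_cons -gcoef_sub IH nfw_ok nfX_cons.
case: (nfw p.2) => [[e t]|]; last by rewrite gcoef0 mulr0 add0r.
by rewrite [in RHS]gcoef_sub big_cons -gcoef_sub /= fM fsgn gcoef_scale mulrA (mulrC (f p.1)).
Qed.

Hypothesis fD : forall a b, f (a + b) = f a + f b.
Hypothesis f0 : f 0 = 0.

Lemma f_csum t X : f (csum t X) = \sum_(p <- X | p.2 == t) f p.1.
Proof.
elim: X => [|p X IH] /=; first by rewrite big_nil f0.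
by rewrite big_cons fD IH; case: (p.2 == t) => //; rewrite f0 add0r.
Qed.

Lemma zcheck_ok X S : zcheck X -> gcoef (sub X) S = 0.
Proof.
move=> /allP hz; rewrite gcoef_sub.
pose U := undup (map snd X).
transitivity (\sum_(p <- X) \sum_(t <- U) (if p.2 == t then f p.1 * gcoef (gprod t) S else 0)).
  apply: eq_big_seq => p pX.
  rewrite (bigD1_seq p.2) ?undup_uniq //; last by rewrite mem_undup map_f.
  rewrite eqxx /= big1 ?addr0 // => t /negPf; by rewrite eq_sym => ->.
rewrite exchange_big big_seq big1 // => t; rewrite /U mem_undup => tX.
by rewrite -big_mkcond /= -mulr_suml -f_csum (eqP (hz t tX)) f0 mul0r.
Qed.

End Odd.
End Sub.

Lemma enum_ordl n : ordl n = enum 'I_n.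
Proof. elim: n => [|n IH] /=; first by rewrite enum_ord0. by rewrite enum_ordSl IH. Qed.

Section Conv.
Variable F : fieldType.
Lemma mxmulE n (A B : gmx F n) : mxmul A B = mxmulc A B.
Proof. by rewrite /mxmul /mxmulc enum_ordl. Qed.
Lemma mxtrE n (A : gmx F n) : mxtr A = mxtrc A.
Proof. by rewrite /mxtr /mxtrc enum_ordl. Qed.
Lemma mxpowE n (A : gmx F n) k : mxpow A k = mxpowc A k.
Proof. by elim: k => [|k IH] //=; rewrite mxmulE IH. Qed.
Lemma E2E (B : gmx F 2) : E2 B = E2c B.
Proof. by rewrite /E2 /E2c !mxpowE !mxtrE. Qed.
Lemma E3E (B : gmx F 3) : E3 B = E3c B.
Proof. by rewrite /E3 /E3c !mxpowE !mxtrE. Qed.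
End Conv.

Definition chk2 := all (fun i => all (fun j => zcheck (nfX (E2c (@Gen rat 2) i j))) (ordl 2)) (ordl 2).
Definition chk3 := all (fun i => all (fun j => zcheck (nfX (E3c (@Gen rat 3) i j))) (ordl 3)) (ordl 3).



Lemma chk2_ok : chk2 = true. Proof. by vm_compute. Qed.
Lemma chk3_ok : chk3 = true. Proof. by vm_compute. Qed.

Section Ratr.
Variable K : fieldType.
Hypothesis charK0 : [pchar K] =i pred0.

Lemma intr_eq0K (z : int) : (z%:~R == 0 :> K) = (z == 0).
Proof.
have h := (iffLR (pcharf0P K) charK0).
case: z => n /=; first by rewrite h.
by rewrite NegzE mulrNz oppr_eq0 h.
Qed.

Lemma ratrD (x y : rat) : ratr (x + y) = ratr x + ratr y :> K.
Proof.
have injZtoQ: @injective rat int intr by apply: intr_inj.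
have nz_den z: (denq z)%:~R != 0 :> K by rewrite intr_eq0K denq_eq0.
rewrite /ratr.
apply: (canLR (mulfK (nz_den _))); apply: (mulIf (nz_den x)).
rewrite mulrAC mulrDl divfK ?nz_den // mulrAC -!rmorphM.
apply: (mulIf (nz_den y)); rewrite mulrAC mulrDl divfK ?nz_den //.
rewrite -!(rmorphM, rmorphD); congr _%:~R; apply: injZtoQ.
rewrite !(rmorphM, rmorphD) /= [_ + _]lock /= -lock !numqE.
by rewrite (mulrAC y) -!mulrDl -mulrA mulrAC !mulrA.
Qed.

Lemma ratrM (x y : rat) : ratr (x * y) = ratr x * ratr y :> K.
Proof.
have injZtoQ: @injective rat int intr by apply: intr_inj.
have nz_den z: (denq z)%:~R != 0 :> K by rewrite intr_eq0K denq_eq0.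
rewrite /ratr mulrC mulrAC; apply: canLR (mulKf (nz_den _)) _; rewrite !mulrA.
do 2!apply: canRL (mulfK (nz_den _)) _; rewrite -!rmorphM; congr _%:~R.
apply: injZtoQ; rewrite !rmorphM [x * y]lock /= !numqE -lock.
by rewrite -!mulrA mulrA mulrCA -!mulrA (mulrCA y).
Qed.

Lemma ratr1 : ratr 1 = 1 :> K.
Proof. by rewrite /ratr divr1. Qed.
Lemma ratr0 : ratr 0 = 0 :> K.
Proof. by rewrite /ratr mul0r. Qed.
Lemma ratrN (x : rat) : ratr (- x) = - ratr x :> K.
Proof. by apply/eqP; rewrite -subr_eq0 opprK -ratrD addNr ratr0. Qed.
Lemma ratrN1 : ratr (-1) = -1 :> K.
Proof. by rewrite ratrN ratr1. Qed.
Lemma ratr_n n : ratr n%:R = n%:R :> K.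
Proof. exact: ratr_nat. Qed.
Lemma two_neq0 : (2%:R : K) != 0.
Proof. by rewrite (iffLR (pcharf0P K) charK0). Qed.
Lemma ratr_half : ratr (2%:R^-1) = (2%:R^-1 : K).
Proof.
have h : ratr (2%:R : rat) * ratr (2%:R^-1) = 1 :> K.
  by rewrite -ratrM mulfV ?ratr1.
apply: (mulfI two_neq0); rewrite mulfV ?two_neq0 //.
by rewrite -(ratr_n 2).
Qed.
Lemma ratr_mhalf : ratr (- 2%:R^-1) = (- 2%:R^-1 : K).
Proof. by rewrite ratrN ratr_half. Qed.
Lemma ratr_m2 : ratr (- 2%:R) = (- 2%:R : K).
Proof. by rewrite ratrN ratr_n. Qed.
End Ratr.

Lemma hv_gen (K : fieldType) n (B : gmx K n.+1) (i j : 'I_n.+1) :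
  B (inord ((i * n.+1 + j) %/ n.+1)) (inord ((i * n.+1 + j) %% n.+1)) = B i j.
Proof.
rewrite divnMDl // divn_small // addn0 modnMDl modn_small //.
by rewrite !inord_val.
Qed.

Unset Implicit Arguments.
Set Strict Implicit.

Ltac hom_tac K charK0 :=
  repeat first
    [ apply: mcg_add | apply: mcg_mul | apply: mcg_lmul | apply: mcg_scale
    | apply: mcg_scalar | apply: mcg_pow | apply: mcg_gen
    | apply: cg_add | apply: cg_mul | apply: cg_opp | apply: cg_scale | apply: cg_tr
    | exact: (@ratrM K charK0) | exact: (@ratr1 K) | exact: (@ratrN1 K charK0)
    | exact: (@ratr_half K charK0) | exact: (@ratr_mhalf K charK0)
    | exact: (@ratr_m2 K charK0) | exact: (@ratr_n K)
    | exact: hv_gen | apply: cg_one ].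

Theorem corollary2p7 (K : fieldType) (charK0 : [pchar K] =i pred0) :
  (forall B : gmx K 2, mxodd B ->
     let t1 := mxtr B in
     let t2 := mxtr (mxpow B 2) in
     let t3 := mxtr (mxpow B 3) in
     mxzerop
       (mxadd (mxscalar 2 (gadd (gmul t1 t2) (gopp t3)))
       (mxadd (mxlmul (gopp t2) B)
       (mxadd (mxlmul (gopp t1) (mxpow B 2))
              (mxscale 2%:R (mxpow B 3)))))) /\
  (forall B : gmx K 3, mxodd B ->
     let t1 := mxtr B in
     let t2 := mxtr (mxpow B 2) in
     let t3 := mxtr (mxpow B 3) in
     let t4 := mxtr (mxpow B 4) in
     let t5 := mxtr (mxpow B 5) in
     mxzerop
       (mxadd (mxscalar 3
                (gadd (gscale (- (2%:R)^-1) (gmul (gmul t2 t2) t1))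
                (gadd (gmul t3 t2)
                (gadd (gscale ((2%:R)^-1) (gmul t4 t1))
                      (gopp t5)))))
       (mxadd (mxlmul (gadd (gscale ((2%:R)^-1) (gmul t2 t2))
                            (gscale (- (2%:R)^-1) t4)) B)
       (mxadd (mxlmul (gadd (gmul t2 t1) (gopp t3)) (mxpow B 2))
       (mxadd (mxlmul (gscale (- 2%:R) t2) (mxpow B 3))
       (mxadd (mxlmul (gopp t1) (mxpow B 4))
              (mxscale 3%:R (mxpow B 5)))))))).
Proof.
have fM := @ratrM K charK0.
have f1 := @ratr1 K.
have fN1 := @ratrN1 K charK0.
have fD := @ratrD K charK0.
have f0 := @ratr0 K.
have h2 := @two_neq0 K charK0.
split.
- move=> B hB; change (mxzerop (E2 B)) => i j S _.
  pose v := fun k => B (inord (k %/ 2)) (inord (k %% 2)).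
  have hm : meq (msub (@ratr K) v (E2 (@Gen rat 2))) (E2 B).
    rewrite /E2 /Gen; hom_tac K charK0.
  have hodd : forall k, godd (v k) by move=> k; apply: hB.
  rewrite -(hm i j S) /msub E2E (sub_nfX fM f1 fN1 hodd h2).
  apply: (zcheck_ok v fD f0).
  have := chk2_ok; rewrite /chk2 => /allP /(_ i).
  rewrite enum_ordl mem_enum => /(_ isT) /allP /(_ j); rewrite mem_enum; exact.
- move=> B hB; change (mxzerop (E3 B)) => i j S _.
  pose v := fun k => B (inord (k %/ 3)) (inord (k %% 3)).
  have hm : meq (msub (@ratr K) v (E3 (@Gen rat 3))) (E3 B).
    rewrite /E3 /Gen; hom_tac K charK0.
  have hodd : forall k, godd (v k) by move=> k; apply: hB.
  rewrite -(hm i j S) /msub E3E (sub_nfX fM f1 fN1 hodd h2).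
  apply: (zcheck_ok v fD f0).
  have := chk3_ok; rewrite /chk3 => /allP /(_ i).
  rewrite enum_ordl mem_enum => /(_ isT) /allP /(_ j); rewrite mem_enum; exact.
Qed.
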